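(* Let $r\geq 4$ and $0\leq k\leq 7$. Then the edge set of $Q_{2^r}$ can be partitioned into the edge sets of $2^{r-1}-k$ Hamiltonian cycles (copies of $C_{2^{2^r}}$) of $Q_{2^r}$ and the edge set of a DVOP$[k]$ in $Q_{2^r}$.
   Context: $Q_q$ denotes the $q$-dimensional hypercube graph (vertices are $q$-tuples of $0$'s and $1$'s, adjacent iff they differ in exactly one coordinate). $C_N$ is the cycle on $N$ vertices. $P_k$ is the path with vertices $0,1,\dots,k$ and edges $\hat{j}$ joining $j-1$ and $j$. For a graph $G$, a DVOP$[k]$ is a family $\{p_v\}_{v\in V(G)}$ of embeddings $p_v:P_k\to G$ such that (a) $p_v(\hat{j})=p_{v'}(\hat{j'})$ implies $v=v'$ and $j=j'$, and (b) $p_v(0)=v$ for every $v$; its edge set is the union of the edge images of all $p_v$. *)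

(* Defs.v *)
From mathcomp Require Import all_boot.
Set Implicit Arguments. Unset Strict Implicit. Unset Printing Implicit Defensive.

Definition hvert (q : nat) : finType := {ffun 'I_q -> bool}.

Definition hadj (q : nat) (u v : hvert q) : bool :=
  #|[set i : 'I_q | u i != v i]| == 1.

Definition edge_of (q : nat) (u v : hvert q) : {set hvert q} := [set u; v].

Definition hedges (q : nat) : {set {set hvert q}} :=
  [set edge_of e.1 e.2 | e in [set e : hvert q * hvert q | hadj e.1 e.2]].

Definition ham_cycle (q : nat) (c : seq (hvert q)) : Prop :=
  [/\ uniq c, size c = #|hvert q| & cycle (@hadj q) c].

Definition cycle_edges (q : nat) (c : seq (hvert q)) : {set {set hvert q}} :=
  [set edge_of x (next c x) | x in c].

(* p : hvert q -> nat -> hvert q; p v restricted to {0,...,k} is the map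
   P_k -> Q_q.  It is an embedding: injective on {0..k} and sending the edge
   j^ = {j-1, j} (1 <= j <= k) to an edge of Q_q. *)
Definition path_embedding (q k : nat) (f : nat -> hvert q) : Prop :=
  (forall i j, i <= k -> j <= k -> f i = f j -> i = j) /\
  (forall j, 1 <= j <= k -> hadj (f j.-1) (f j)).

Definition pedge (q : nat) (f : nat -> hvert q) (j : nat) : {set hvert q} :=
  edge_of (f j.-1) (f j).

Definition DVOP (q k : nat) (p : hvert q -> nat -> hvert q) : Prop :=
  [/\ forall v, path_embedding k (p v),
      (forall v v' j j', 1 <= j <= k -> 1 <= j' <= k ->
         pedge (p v) j = pedge (p v') j' -> v = v' /\ j = j')
    & forall v, p v 0 = v].

Definition dvop_edges (q k : nat) (p : hvert q -> nat -> hvert q)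
  : {set {set hvert q}} :=
  [set pedge (p e.1) (val e.2) | e in [set e : hvert q * 'I_k.+1 | 0 < val e.2]].

(* Main.v *)
Require Import Defs.
From mathcomp Require Import all_boot zify.
Set Implicit Arguments. Unset Strict Implicit. Unset Printing Implicit Defensive.

Definition diffc (x y : seq bool) : nat := count id [seq p.1 != p.2 | p <- zip x y].
Definition adjs (x y : seq bool) := diffc x y == 1.

Lemma diffc_cat x1 x2 y1 y2 : size x1 = size y1 ->
  diffc (x1 ++ x2) (y1 ++ y2) = diffc x1 y1 + diffc x2 y2.
Proof. by move=> h; rewrite /diffc zip_cat // map_cat count_cat. Qed.

Lemma diffc_refl x : diffc x x = 0.
Proof. by elim: x => //= b x; rewrite /diffc /= eqxx. Qed.

Lemma diffc0 x y : size x = size y -> diffc x y = 0 -> x = y.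
Proof.
elim: x y => [|a x IH] [|b y] //= [] hs.
rewrite /diffc /=; case: eqP => [->|] //= h.
by rewrite (IH y hs h).
Qed.

Lemma adjs_neq x y : adjs x y -> x <> y.
Proof. by move=> h e; move: h; rewrite e /adjs diffc_refl. Qed.

Lemma cat_inj (a b a' b' : seq bool) : size a = size a' -> a ++ b = a' ++ b' -> a = a' /\ b = b'.
Proof.
elim: a a' => [|x a IH] [|y a'] //= [] hs [] -> /(IH _ hs) [-> ->]; done.
Qed.

Definition c4 (s : nat) : seq bool :=
  match s with 0 => [:: false; false] | 1 => [:: true; false]
  | 2 => [:: true; true] | _ => [:: false; true] end.

Definition NN n := 2 ^ (2 ^ n.+1).
Definition aa N s := (s - s %/ N) %% N.
Definition bb N s := (s %/ N) %% N.

Fixpoint G n (i s : nat) : seq bool :=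
  match n with
  | 0 => c4 (s %% 4)
  | n'.+1 => let N := NN n' in let t := i./2 in
      if odd i then G n' t (bb N s) ++ G n' t (aa N s)
      else G n' t (aa N s) ++ G n' t (bb N s)
  end.

Lemma NN_gt n : 3 < NN n.
Proof.
rewrite /NN; have h : 2 <= 2 ^ n.+1.
  have : 0 < 2 ^ n by rewrite expn_gt0.
  rewrite expnS; lia.
apply: leq_trans (leq_pexp2l _ h) => //.
Qed.

Lemma NN_pos n : 0 < NN n.
Proof. by have := NN_gt n; lia. Qed.

Lemma NNS n : NN n.+1 = NN n * NN n.
Proof. by rewrite /NN (expnS 2 n.+1) mulnC expnM expnS expn1. Qed.

Lemma size_G n i s : size (G n i s) = 2 ^ n.+1.
Proof.
elim: n i s => [|n IH] i s /=; first by case: (s %% 4) => [|[|[|]]].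
by case: ifP => _; rewrite size_cat !IH (expnS 2 n.+1); lia.
Qed.

Lemma modnB_cong a b a' b' N : b <= a -> b' <= a' ->
  a = a' %[mod N] -> b = b' %[mod N] -> a - b = a' - b' %[mod N].
Proof.
move=> h1 h2 ea eb; apply/eqP; rewrite -(eqn_modDr b).
rewrite subnK // ea -(modnDmr (a' - b')) eb modnDmr subnK //.
Qed.

Lemma aa_mod N s : 0 < N -> aa N (s %% (N * N)) = aa N s.
Proof.
move=> N0; rewrite /aa; apply: modnB_cong; try exact: leq_div.
  by rewrite modn_dvdm // dvdn_mull.
by rewrite !modn_divl modn_mod.
Qed.

Lemma bb_mod N s : bb N (s %% (N * N)) = bb N s.
Proof. by rewrite /bb !modn_divl modn_mod. Qed.

Lemma G_mod n i s : G n i (s %% NN n) = G n i s.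
Proof.
elim: n i s => [|n IH] i s /=; first by rewrite /NN modn_dvdm.
by rewrite NNS aa_mod ?NN_pos // bb_mod.
Qed.

Lemma G_eqmod n i u v : u = v %[mod NN n] -> G n i u = G n i v.
Proof. by move=> e; rewrite -G_mod e G_mod. Qed.

Lemma modNN N u : 0 < N -> u %% (N * N) = (u %/ N %% N) * N + u %% N.
Proof.
move=> N0; rewrite {1}(divn_eq (u %% (N*N)) N) -modn_divl modn_dvdm //.
exact: dvdn_mull.
Qed.

Lemma size_GG n i s j u : size (G n i s) = size (G n j u).
Proof. by rewrite !size_G. Qed.

Lemma G_inj n i u v : G n i u = G n i v -> u = v %[mod NN n].
Proof.
elim: n i u v => [|n IH] i u v /=.
  change (NN 0) with 4.
  move: (ltn_pmod u (isT : 0 < 4)) (ltn_pmod v (isT : 0 < 4)).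
  by case: (u %% 4) => [|[|[|[|?]]]]; case: (v %% 4) => [|[|[|[|?]]]].
rewrite NNS; set N := NN n; have N0 : 0 < N by exact: NN_pos.
move=> e.
have [ea eb] : aa N u = aa N v %[mod N] /\ bb N u = bb N v %[mod N].
  case: (odd i) e => e.
    by case: (cat_inj (size_GG _ _ _ _ _) e) => /IH h1 /IH h2; split.
  by case: (cat_inj (size_GG _ _ _ _ _) e) => /IH h1 /IH h2; split.
move: ea eb; rewrite /aa /bb !modn_mod => ea eb.
have hu : u = v %[mod N].
  rewrite -(subnK (leq_div u N)) -(subnK (leq_div v N)).
  by rewrite -modnDm ea eb modnDm.
by rewrite !modNN // eb hu.
Qed.

Lemma succ_mod a N : a.+1 = (a %% N).+1 %[mod N].
Proof. by rewrite -[a.+1]addn1 -[(a %% N).+1]addn1 modnDml. Qed.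

Lemma succ_cong a b N : a = b %[mod N] -> a.+1 = b.+1 %[mod N].
Proof. by move=> e; rewrite succ_mod e -succ_mod. Qed.

Lemma dvd_cong a b N : a = b %[mod N] -> (N %| a) = (N %| b).
Proof. by move=> e; rewrite /dvdn e. Qed.

Definition tor n i s L R :=
  [/\ G n.+1 i s = G n i./2 L ++ G n i./2 R, L + R = s %[mod NN n] &
     G n.+1 i s.+1 = if (NN n %| (L + R).+1) == odd i
                     then G n i./2 L.+1 ++ G n i./2 R
                     else G n i./2 L ++ G n i./2 R.+1].

Lemma tor_std n i s :
  tor n i s (if odd i then bb (NN n) s else aa (NN n) s)
            (if odd i then aa (NN n) s else bb (NN n) s).
Proof.
set N := NN n; have N0 : 0 < N by exact: NN_pos.
have e1 : aa N s + bb N s = s %[mod N].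
  by rewrite /aa /bb modnDm subnK // leq_div.
have e1' : (N %| (aa N s + bb N s).+1) = (N %| s.+1).
  by apply: dvd_cong; apply: succ_cong.
have e2 : (N %| (bb N s + aa N s).+1) = (N %| s.+1) by rewrite addnC.
case hd: (N %| s.+1).
  have d : s.+1 %/ N = (s %/ N).+1 by rewrite divnS // hd.
  have hb : G n i./2 (bb N s.+1) = G n i./2 (bb N s).+1.
    by apply: G_eqmod; rewrite /bb d modn_mod -succ_mod.
  have ha : aa N s.+1 = aa N s by rewrite /aa d subSS.
  rewrite /tor; split; first by rewrite /=; case: (odd i).
    by case: (odd i) => //; rewrite addnC.
  by rewrite /=; case: (odd i); rewrite ?e2 ?e1' hd /= ?hb ?ha.
have d : s.+1 %/ N = s %/ N by rewrite divnS // hd.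
have hb : bb N s.+1 = bb N s by rewrite /bb d.
have ha : G n i./2 (aa N s.+1) = G n i./2 (aa N s).+1.
  apply: G_eqmod; rewrite /aa d subSn ?leq_div // modn_mod -succ_mod //.
rewrite /tor; split; first by rewrite /=; case: (odd i).
  by case: (odd i) => //; rewrite addnC.
by rewrite /=; case: (odd i); rewrite ?e2 ?e1' hd /= ?hb ?ha.
Qed.

Lemma tor_cong n i s L R L' R' : tor n i s L R ->
  L = L' %[mod NN n] -> R = R' %[mod NN n] -> tor n i s L' R'.
Proof.
move=> [h1 h2 h3] eL eR.
have eS : L + R = L' + R' %[mod NN n] by rewrite -modnDm eL eR modnDm.
split.
- by rewrite h1 (G_eqmod _ eL) (G_eqmod _ eR).
- by rewrite -eS.
- rewrite h3 (dvd_cong (succ_cong eS)) (G_eqmod _ eL) (G_eqmod _ eR).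
  by rewrite (G_eqmod _ (succ_cong eL)) (G_eqmod _ (succ_cong eR)).
Qed.

Lemma ab_surj N al be : 0 < N -> exists s, aa N s = al %[mod N] /\ bb N s = be %[mod N].
Proof.
move=> N0; set b' := be %% N.
exists (b' * N + (al + be) %% N).
have hd : (b' * N + (al + be) %% N) %/ N = b'.
  by rewrite divnMDl // divn_small ?ltn_pmod // addn0.
rewrite /aa /bb hd !modn_mod; split; last by [].
apply/eqP; rewrite -(eqn_modDr b') subnK; last first.
  by apply: leq_trans (leq_addr _ _); rewrite leq_pmulr.
by rewrite modnMDl modn_mod modnDmr.
Qed.

Lemma tor_surj n i L R : exists s, tor n i s L R.
Proof.
have N0 := NN_pos n.
case hi: (odd i).
  have [s [h1 h2]] := ab_surj R L N0; exists s.
  by apply: tor_cong (tor_std n i s) _ _; rewrite hi.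
have [s [h1 h2]] := ab_surj L R N0; exists s.
by apply: tor_cong (tor_std n i s) _ _; rewrite hi.
Qed.

Lemma G_adj n i s : adjs (G n i s) (G n i s.+1).
Proof.
elim: n i s => [|n IH] i s.
  rewrite /= (succ_mod s 4); move: (ltn_pmod s (isT : 0 < 4)).
  by case: (s %% 4) => [|[|[|[|?]]]].
move: (tor_std n i s).
move: (if odd i then bb _ s else aa _ s) (if odd i then aa _ s else bb _ s) => L R [h1 _ h3].
rewrite h1 h3.
case: ifP => _; rewrite /adjs diffc_cat ?size_G //.
  by rewrite (diffc_refl (G n _ R)); move/eqP: (IH i./2 L) ->.
by rewrite (diffc_refl (G n _ L)); move/eqP: (IH i./2 R) ->.
Qed.

Lemma G_nadj n j u : G n j u <> G n j u.+1.
Proof. exact: adjs_neq (G_adj n j u). Qed.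

Lemma G_noflip n t u v : G n t u = G n t v.+1 -> G n t u.+1 = G n t v -> False.
Proof.
move=> /G_inj e1 /G_inj e2.
have e3 : v + 2 = v + 0 %[mod NN n].
  by rewrite addn0 addn2 -e2; apply: succ_cong.
move: e3; move/eqP; rewrite eqn_modDl mod0n modn_small ?NN_gt //.
by apply: leq_trans (NN_gt n).
Qed.

Lemma G_surj n i x : size x = 2 ^ n.+1 -> exists s, x = G n i s.
Proof.
elim: n i x => [|n IH] i x hx.
  case: x hx => [|a [|b [|]]] // _.
  by case: a; case: b; [exists 2 | exists 1 | exists 3 | exists 0].
have hs : size x = 2 ^ n.+1 + 2 ^ n.+1 by rewrite hx (expnS 2 n.+1); lia.
have ht : size (take (2 ^ n.+1) x) = 2 ^ n.+1 by rewrite size_take hs; case: ifP => //; lia.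
have hd : size (drop (2 ^ n.+1) x) = 2 ^ n.+1 by rewrite size_drop hs; lia.
have [L hL] := IH i./2 _ ht; have [R hR] := IH i./2 _ hd.
have [s [h1 _ _]] := tor_surj n i L R.
by exists s; rewrite h1 -hL -hR cat_take_drop.
Qed.

Definition sameedge (x y x' y' : seq bool) := (x = x' /\ y = y') \/ (x = y' /\ y = x').

Lemma half_lt n i : i < 2 ^ n.+1 -> i./2 < 2 ^ n.
Proof.
rewrite expnS => h; have e := odd_double_half i; rewrite -muln2 in e.
have : odd i <= 1 by case: (odd i).
lia.
Qed.

Lemma same_i i i' : i./2 = i'./2 -> odd i = odd i' -> i = i'.
Proof. by move=> h1 h2; rewrite -(odd_double_half i) -(odd_double_half i') h1 h2. Qed.

Lemma tor_disj n i i' s s' L R L' R' :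
  (forall j j' u u', j < 2^n -> j' < 2^n ->
     sameedge (G n j u) (G n j u.+1) (G n j' u') (G n j' u'.+1) -> j = j') ->
  i < 2^n.+1 -> i' < 2^n.+1 -> tor n i s L R -> tor n i' s' L' R' ->
  sameedge (G n.+1 i s) (G n.+1 i s.+1) (G n.+1 i' s') (G n.+1 i' s'.+1) -> i = i'.
Proof.
move=> IH /half_lt hi /half_lt hi' [h1 _ h3] [h1' _ h3'].
rewrite h1 h3 h1' h3'.
move: hi hi'; set t := i./2; set t' := i'./2 => hi hi'.
have CI := cat_inj (size_GG _ _ _ _ _).
case c: ((NN n %| (L + R).+1) == odd i); case c': ((NN n %| (L' + R').+1) == odd i').
- case=> [[/CI [E1a E1b] /CI [E2a E2b]]|[/CI [E1a E1b] /CI [E2a E2b]]].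
    have tt : t = t' by apply: (IH _ _ L L') => //; left.
    rewrite -tt in E1a E1b; apply: same_i => //.
    move/eqP: c <-; move/eqP: c' <-; apply: dvd_cong; apply: succ_cong.
    by rewrite -modnDm (G_inj E1a) (G_inj E1b) modnDm.
  have tt : t = t' by apply: (IH _ _ L L') => //; right.
  by rewrite -tt in E1a E2a; case: (G_noflip E1a E2a).
- case=> [[/CI [E1a E1b] /CI [E2a E2b]]|[/CI [E1a E1b] /CI [E2a E2b]]].
    by case: (@G_nadj n t L); rewrite E1a E2a.
  by case: (@G_nadj n t L); rewrite E1a E2a.
- case=> [[/CI [E1a E1b] /CI [E2a E2b]]|[/CI [E1a E1b] /CI [E2a E2b]]].
    by case: (@G_nadj n t' L'); rewrite -E1a -E2a.
  by case: (@G_nadj n t' L'); rewrite -E1a -E2a.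
- case=> [[/CI [E1a E1b] /CI [E2a E2b]]|[/CI [E1a E1b] /CI [E2a E2b]]].
    have tt : t = t' by apply: (IH _ _ R R') => //; left.
    rewrite -tt in E1a E1b; apply: same_i => //.
    have dd : (NN n %| (L + R).+1) = (NN n %| (L' + R').+1).
      apply: dvd_cong; apply: succ_cong.
      by rewrite -modnDm (G_inj E1a) (G_inj E1b) modnDm.
    by move: c c'; rewrite dd; case: (_ %| _); case: (odd i); case: (odd i').
  have tt : t = t' by apply: (IH _ _ R R') => //; right.
  by rewrite -tt in E1b E2b; case: (G_noflip E1b E2b).
Qed.

Lemma G_disj n i i' s s' : i < 2 ^ n -> i' < 2 ^ n ->
  sameedge (G n i s) (G n i s.+1) (G n i' s') (G n i' s'.+1) -> i = i'.
Proof.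
elim: n i i' s s' => [|n IH] i i' s s'; first by rewrite expn0; lia.
move=> hi hi' E; exact: (tor_disj IH hi hi' (tor_std n i s) (tor_std n i' s') E).
Qed.

Lemma odd_bd (b : bool) t : odd (b + t.*2) = b.
Proof. by rewrite oddD odd_double addbF; case: b. Qed.

Lemma bd_lt (b : bool) t n : t < 2 ^ n -> b + t.*2 < 2 ^ n.+1.
Proof. rewrite expnS -muln2 => h; have : b <= 1 by case: b. lia. Qed.

Ltac c4tac := solve [ exists 0, 0; split => //; (left; done) || (right; done)
                    | exists 0, 1; split => //; (left; done) || (right; done)
                    | exists 0, 2; split => //; (left; done) || (right; done)
                    | exists 0, 3; split => //; (left; done) || (right; done) ].

Lemma G_cover n x y : size x = 2 ^ n.+1 -> size y = 2 ^ n.+1 -> adjs x y ->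
  exists i s, i < 2 ^ n /\ sameedge x y (G n i s) (G n i s.+1).
Proof.
elim: n x y => [|n IH] x y hx hy.
  case: x hx => [|a [|b [|]]] // _; case: y hy => [|c [|d [|]]] // _.
  by case: a; case: b; case: c; case: d; rewrite /adjs /diffc /= => // _; c4tac.
set h := 2 ^ n.+1.
have hh : 2 ^ n.+2 = h + h by rewrite /h (expnS 2 n.+1); lia.
have s1 (z : seq bool) : size z = 2 ^ n.+2 -> size (take h z) = h.
  by move=> hz; rewrite size_take hz hh; case: ifP => //; lia.
have s2 (z : seq bool) : size z = 2 ^ n.+2 -> size (drop h z) = h.
  by move=> hz; rewrite size_drop hz hh; lia.
rewrite -(cat_take_drop h x) -(cat_take_drop h y).
move: (s1 _ hx) (s2 _ hx) (s1 _ hy) (s2 _ hy).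
move: (take h x) (drop h x) (take h y) (drop h y) => x1 x2 y1 y2 hx1 hx2 hy1 hy2.
rewrite /adjs diffc_cat ?hx1 ?hy1 //.
case E1: (diffc x1 y1) => [|[|k]] //=.
  rewrite add0n => E2.
  have ex : x1 = y1 by apply: diffc0 => //; rewrite hx1.
  have [t [u [ht E]]] := IH _ _ hx2 hy2 E2.
  have [L hL] := G_surj t hx1.
  set b := ~~ (NN n %| (L + u).+1).
  have [s [h1 _ h3]] := tor_surj n (b + t.*2) L u.
  suff K : (b + t.*2) < 2 ^ n.+1 /\ sameedge (x1 ++ x2) (y1 ++ y2)
     (G n.+1 (b + t.*2) s) (G n.+1 (b + t.*2) s.+1) by exists (b + t.*2), s.
  split; first exact: bd_lt.
  rewrite h1 h3 half_bit_double odd_bd /b.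
  case: (NN n %| (L + u).+1) => /=; rewrite -ex hL.
    by case: E => [[-> ->]|[-> ->]]; [left|right].
  by case: E => [[-> ->]|[-> ->]]; [left|right].
move=> /eqP E2'; have E2 : diffc x2 y2 = 0 by lia.
move/eqP: E1 => E1.
have ex : x2 = y2 by apply: diffc0 => //; rewrite hx2.
have [t [u [ht E]]] := IH _ _ hx1 hy1 E1.
have [R hR] := G_surj t hx2.
set b := (NN n %| (u + R).+1).
have [s [h1 _ h3]] := tor_surj n (b + t.*2) u R.
suff K : (b + t.*2) < 2 ^ n.+1 /\ sameedge (x1 ++ x2) (y1 ++ y2)
   (G n.+1 (b + t.*2) s) (G n.+1 (b + t.*2) s.+1) by exists (b + t.*2), s.
split; first exact: bd_lt.
rewrite h1 h3 half_bit_double odd_bd /b eqxx -ex hR.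
by case: E => [[-> ->]|[-> ->]]; [left|right].
Qed.

Fixpoint Pot (n : nat) (x : seq bool) : nat :=
  match n with
  | 0 => 0
  | p.+1 => match p with
     | 0 => index x [seq G 1 0 s | s <- iota 0 16] %% 8
     | n'.+1 => Pot p (take (2 ^ p.+1) x) + Pot p (drop (2 ^ p.+1) x)
     end
  end.

Definition dl m i := if i < 2 ^ m then 1 else 5.

Lemma base_check : all (fun s => all (fun i => Pot 1 (G 1 i s.+1) %% 8 == (Pot 1 (G 1 i s) + dl 0 i) %% 8) (iota 0 2)) (iota 0 16).
Proof. by vm_compute. Qed.

Lemma Pot_cat m A B : size A = 2 ^ m.+2 -> Pot m.+2 (A ++ B) = Pot m.+1 A + Pot m.+1 B.
Proof. by move=> hA; rewrite /= -hA take_size_cat // drop_size_cat. Qed.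

Lemma half_ltE m i : (i./2 < 2 ^ m) = (i < 2 ^ m.+1).
Proof.
rewrite expnS; have e := odd_double_half i; rewrite -muln2 in e.
have : odd i <= 1 by case: (odd i).
move=> h; apply/idP/idP; lia.
Qed.

Lemma Pot_step m i s : i < 2 ^ m.+1 ->
  Pot m.+1 (G m.+1 i s.+1) = Pot m.+1 (G m.+1 i s) + dl m i %[mod 8].
Proof.
elim: m i s => [|m IH] i s hi.
  have e : G 1 i s.+1 = G 1 i (s %% 16).+1.
    by apply: G_eqmod; rewrite succ_mod.
  rewrite e -(G_mod 1 i s); change (NN 1) with 16.
  move: (ltn_pmod s (isT : 0 < 16)) base_check; move: (s %% 16) => s' hs.
  have hs' : s' \in iota 0 16 by rewrite mem_iota.
  have hi' : i \in iota 0 2 by rewrite mem_iota.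
  by move=> /allP H; have /allP H2 := H s' hs'; have /eqP := H2 i hi'.
have ht : i./2 < 2 ^ m.+1 by rewrite half_ltE.
have hd : dl m.+1 i = dl m i./2 by rewrite /dl half_ltE.
move: (tor_std m.+1 i s).
move: (if odd i then bb _ s else aa _ s) (if odd i then aa _ s else bb _ s) => L R [h1 _ h3].
rewrite h1 h3 hd; case: ifP => _; rewrite !Pot_cat ?size_G //.
  by rewrite -addnA [Pot _ _ + dl _ _]addnC addnA -modnDml (IH _ _ ht) modnDml.
by rewrite -addnA -modnDmr (IH _ _ ht) modnDmr.
Qed.

Lemma card_count q (P : pred nat) : #|[set i : 'I_q | P i]| = count P (iota 0 q).
Proof.
rewrite cardsE cardE -deprecated_filter_index_enum size_filter.
have -> : index_enum 'I_q = enum 'I_q by rewrite enumT.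
by rewrite -(count_map val P) val_enum_ord.
Qed.

Definition toV q (x : seq bool) : hvert q := [ffun i : 'I_q => nth false x i].
Definition fromV q (v : hvert q) : seq bool := [seq v i | i <- enum 'I_q].

Lemma size_fromV q (v : hvert q) : size (fromV v) = q.
Proof. by rewrite size_map size_enum_ord. Qed.

Lemma toV_fromV q (v : hvert q) : toV q (fromV v) = v.
Proof.
apply/ffunP => i; rewrite ffunE (nth_map i) ?size_enum_ord //.
by rewrite nth_ord_enum.
Qed.

Lemma fromV_toV q x : size x = q -> fromV (toV q x) = x.
Proof.
move=> hx; apply: (@eq_from_nth _ false); first by rewrite size_fromV.
move=> i; rewrite size_fromV => hi.
by rewrite (nth_map (Ordinal hi)) ?size_enum_ord // ffunE nth_enum_ord.
Qed.

Lemma toV_inj q x y : size x = q -> size y = q -> toV q x = toV q y -> x = y.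
Proof. by move=> hx hy e; rewrite -(fromV_toV hx) -(fromV_toV hy) e. Qed.

Lemma diffc_nth q x y : size x = q -> size y = q ->
  diffc x y = count (fun i => nth false x i != nth false y i) (iota 0 q).
Proof.
move=> hx hy; rewrite /diffc.
suff -> : [seq p.1 != p.2 | p <- zip x y] = [seq nth false x i != nth false y i | i <- iota 0 q].
  by rewrite count_map.
apply: (@eq_from_nth _ false); first by rewrite !size_map size_zip size_iota hx hy minnn.
move=> i; rewrite !size_map size_zip hx hy minnn => hi.
rewrite (nth_map (false, false)) ?size_zip ?hx ?hy ?minnn //.
by rewrite (nth_map 0) ?size_iota // nth_zip ?hx ?hy // nth_iota.
Qed.

Lemma hadj_toV q x y : size x = q -> size y = q -> hadj (toV q x) (toV q y) = adjs x y.
Proof.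
move=> hx hy; rewrite /hadj /adjs (diffc_nth hx hy) -card_count.
congr (_ == 1); apply: eq_card => i; rewrite !inE !ffunE //.
Qed.

Lemma adjs_toV q (u w : hvert q) : hadj u w = adjs (fromV u) (fromV w).
Proof. by rewrite -(@hadj_toV q) ?size_fromV // !toV_fromV. Qed.

Lemma edge_eq (T : finType) (u v u' v' : T) : [set u; v] = [set u'; v'] -> u != v ->
  (u = u' /\ v = v') \/ (u = v' /\ v = u').
Proof.
move=> e nuv.
have hu : u \in [set u'; v'] by rewrite -e !inE eqxx.
have hv : v \in [set u'; v'] by rewrite -e !inE eqxx orbT.
have hu' : u' \in [set u; v] by rewrite e !inE eqxx.
move: hu hv hu'; rewrite !inE => /orP [] /eqP eu /orP [] /eqP ev //.
- by rewrite eu ev eqxx in nuv.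
- by left.
- by right.
- by rewrite eu ev eqxx in nuv.
Qed.

Definition gv m c s : hvert (2 ^ m.+2) := toV (2 ^ m.+2) (G m.+1 c s).

Lemma gv_eqmod m c u v : u = v %[mod NN m.+1] -> gv m c u = gv m c v.
Proof. by move=> e; rewrite /gv (G_eqmod _ e). Qed.

Lemma gv_inj m c u v : u < NN m.+1 -> v < NN m.+1 -> gv m c u = gv m c v -> u = v.
Proof.
move=> hu hv /toV_inj e; have := G_inj (e (size_G _ _ _) (size_G _ _ _)).
by rewrite !modn_small.
Qed.

Lemma gv_adj m c s : hadj (gv m c s) (gv m c s.+1).
Proof. by rewrite /gv hadj_toV ?size_G // G_adj. Qed.

Definition cyc m c := [seq gv m c s | s <- iota 0 (NN m.+1)].

Lemma path_iota (T : eqType) (e : rel T) (f : nat -> T) a k :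
  (forall s, e (f s) (f s.+1)) -> path e (f a) [seq f s | s <- iota a.+1 k].
Proof. by move=> h; elim: k a => [|k IH] a //=; rewrite h IH. Qed.

Lemma cyc_uniq m c : uniq (cyc m c).
Proof.
rewrite map_inj_in_uniq ?iota_uniq // => u v; rewrite !mem_iota !add0n.
exact: gv_inj.
Qed.

Lemma cyc_ham m c : ham_cycle (cyc m c).
Proof.
split; first exact: cyc_uniq.
  by rewrite size_map size_iota card_ffun card_bool card_ord.
have : 0 < NN m.+1 := NN_pos _.
have eN : gv m c (NN m.+1) = gv m c 0 by apply: gv_eqmod; rewrite modnn mod0n.
rewrite /cyc; case: (NN m.+1) eN => [|N'] // eN _ /=.
rewrite -[X in rcons _ X]eN -map_rcons -cats1.
have -> : iota 1 N' ++ [:: N'.+1] = iota 1 N'.+1.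
  rewrite (_ : N'.+1 = N' + 1); last by rewrite addn1.
  by rewrite iotaD /= addnC.
by apply: path_iota => s; apply: gv_adj.
Qed.

Lemma next_cyc m c s : s < NN m.+1 -> next (cyc m c) (gv m c s) = gv m c s.+1.
Proof.
move=> hs.
have hx : gv m c s = nth (gv m c 0) (cyc m c) s.
  by rewrite /cyc (nth_map 0) ?size_iota // nth_iota.
have eN : gv m c (NN m.+1) = gv m c 0 by apply: gv_eqmod; rewrite modnn mod0n.
rewrite next_nth {1}hx mem_nth ?size_map ?size_iota //.
rewrite hx index_uniq ?size_map ?size_iota ?cyc_uniq //.
move: hs eN; rewrite /cyc; case: (NN m.+1) => [|N'] // hs eN /=.
case: (ltnP s N') => h.
  by rewrite (nth_map 0) ?size_iota // nth_iota.
have -> : s = N' by lia.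
by rewrite nth_default ?size_map ?size_iota // eN.
Qed.

Lemma mem_cyc_edges m c E :
  E \in cycle_edges (cyc m c) <-> exists s, E = edge_of (gv m c s) (gv m c s.+1).
Proof.
split.
  case/imsetP => x /mapP [s hs ->] ->; exists s.
  by rewrite next_cyc //; move: hs; rewrite mem_iota.
move=> [s ->]; set s' := s %% NN m.+1.
have e1 : gv m c s = gv m c s' by apply: gv_eqmod; rewrite modn_mod.
have e2 : gv m c s.+1 = gv m c s'.+1 by apply: gv_eqmod; rewrite succ_mod.
have hs : s' < NN m.+1 by rewrite ltn_pmod ?NN_pos.
rewrite e1 e2 -next_cyc //; apply/imsetP; exists (gv m c s') => //.
by apply: map_f; rewrite mem_iota.
Qed.

Definition cl m := [:: 0; 1; 2 ^ m; (2 ^ m).+1; 2; 3; (2 ^ m).+2].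
Definition dseq := [:: 1; 1; 5; 5; 1; 1; 5].
Definition Sd j := sumn (take j dseq).

Lemma four_le m : 2 <= m -> 4 <= 2 ^ m.
Proof. by move=> h; rewrite (_ : 4 = 2 ^ 2) // leq_exp2l. Qed.

Lemma cl_dl m l : 2 <= m -> l < 7 -> dl m (nth 0 (cl m) l) = nth 0 dseq l.
Proof.
move=> /four_le h4; rewrite /dl.
by case: l => [|[|[|[|[|[|[|l]]]]]]] //= _; case: ifP => //; lia.
Qed.

Lemma cl_lt m l : 2 <= m -> l < 7 -> nth 0 (cl m) l < 2 ^ m.+1.
Proof.
move=> /four_le h4; rewrite expnS.
by case: l => [|[|[|[|[|[|[|l]]]]]]] //= _; lia.
Qed.

Lemma cl_uniq m : 2 <= m -> uniq (cl m).
Proof.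
move=> /four_le; rewrite /cl; move: (2 ^ m) => a ha.
rewrite /= !inE !negb_or.
repeat (apply/andP; split); apply/eqP; lia.
Qed.

Lemma cl_inj m l l' : 2 <= m -> l < 7 -> l' < 7 ->
  nth 0 (cl m) l = nth 0 (cl m) l' -> l = l'.
Proof. by move=> hm hl hl' /eqP; rewrite nth_uniq ?cl_uniq // => /eqP. Qed.

Lemma Sd_S j : j < 7 -> Sd j.+1 = Sd j + nth 0 dseq j.
Proof. by case: j => [|[|[|[|[|[|[|j]]]]]]]. Qed.

Lemma Sd_inj i j : i <= 7 -> j <= 7 -> Sd i = Sd j %[mod 8] -> i = j.
Proof.
have : all (fun i => all (fun j => (Sd i %% 8 == Sd j %% 8) ==> (i == j)) (iota 0 8)) (iota 0 8).
  by [].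
move=> /allP H hi hj e.
have hi' : i \in iota 0 8 by rewrite mem_iota.
have hj' : j \in iota 0 8 by rewrite mem_iota.
have /allP H2 := H i hi'.
by have /implyP/(_ (introT eqP e))/eqP := H2 j hj'.
Qed.

Definition pos m c x := index x [seq G m.+1 c s | s <- iota 0 (NN m.+1)].

Lemma pos_spec m c x : size x = 2 ^ m.+2 ->
  pos m c x < NN m.+1 /\ G m.+1 c (pos m c x) = x.
Proof.
move=> hx; have [s ->] := G_surj c hx.
have hin : G m.+1 c s \in [seq G m.+1 c s | s <- iota 0 (NN m.+1)].
  rewrite -G_mod; apply: map_f; rewrite mem_iota add0n ltn_pmod //.
  exact: NN_pos.
have hi : pos m c (G m.+1 c s) < NN m.+1.
  by rewrite /pos -index_mem size_map size_iota in hin.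
split => //; have := nth_index (G m.+1 c 0) hin.
by rewrite (nth_map 0) ?size_iota // nth_iota // add0n.
Qed.

Lemma pos_G m c s : pos m c (G m.+1 c s) = s %% NN m.+1.
Proof.
have [h1 h2] := pos_spec c (size_G m.+1 c s).
by rewrite -(G_inj h2) modn_small.
Qed.

Definition succ m c x := G m.+1 c (pos m c x).+1.

Lemma succ_G m c s : succ m c (G m.+1 c s) = G m.+1 c s.+1.
Proof. by rewrite /succ pos_G; apply: G_eqmod; rewrite -succ_mod. Qed.

Fixpoint walk m (x : seq bool) j :=
  match j with 0 => x | j'.+1 => succ m (nth 0 (cl m) j') (walk m x j') end.

Lemma size_walk m x j : size x = 2 ^ m.+2 -> size (walk m x j) = 2 ^ m.+2.
Proof. by case: j => //= j; rewrite size_G. Qed.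

Lemma walk_S m x j : size x = 2 ^ m.+2 ->
  let c := nth 0 (cl m) j in
  walk m x j = G m.+1 c (pos m c (walk m x j)) /\
  walk m x j.+1 = G m.+1 c (pos m c (walk m x j)).+1.
Proof.
move=> hx c; have [_ h] := pos_spec c (size_walk j hx).
by split.
Qed.

Lemma Pot_walk m x j : 2 <= m -> size x = 2 ^ m.+2 -> j <= 7 ->
  Pot m.+1 (walk m x j) = Pot m.+1 x + Sd j %[mod 8].
Proof.
move=> hm hx; elim: j => [|j IH] hj; first by rewrite addn0.
have [e1 e2] := walk_S j hx; rewrite e2 Pot_step ?cl_lt //.
by rewrite -modnDml -e1 IH ?(ltnW hj) // modnDml cl_dl // Sd_S // addnA.
Qed.

Lemma walk_inj_j m x i j : 2 <= m -> size x = 2 ^ m.+2 -> i <= 7 -> j <= 7 ->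
  walk m x i = walk m x j -> i = j.
Proof.
move=> hm hx hi hj e; apply: Sd_inj => //.
apply/eqP; rewrite -(eqn_modDl (Pot m.+1 x)); apply/eqP.
by rewrite -Pot_walk // e Pot_walk.
Qed.

Lemma succ_inj m c a b : size a = 2 ^ m.+2 -> size b = 2 ^ m.+2 ->
  succ m c a = succ m c b -> a = b.
Proof.
move=> ha hb /G_inj e.
have [pa ea] := pos_spec c ha; have [pb eb] := pos_spec c hb.
have e' : pos m c a = pos m c b %[mod NN m.+1].
  by apply/eqP; rewrite -(eqn_modDr 1) !addn1; apply/eqP.
by rewrite -ea -eb; move: e'; rewrite !modn_small // => ->.
Qed.

Lemma walk_inj_x m x y j : size x = 2 ^ m.+2 -> size y = 2 ^ m.+2 ->
  walk m x j = walk m y j -> x = y.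
Proof.
move=> hx hy; elim: j => [|j IH] //= e.
by apply: IH; apply: succ_inj e; apply: size_walk.
Qed.

Lemma walk_surj m y j : size y = 2 ^ m.+2 -> exists x, size x = 2 ^ m.+2 /\ walk m x j = y.
Proof.
elim: j y => [|j IH] y hy; first by exists y.
set c := nth 0 (cl m) j.
have [t ->] := G_surj c hy.
have [x [hx ex]] := IH (G m.+1 c (t + (NN m.+1).-1)) (size_G _ _ _).
exists x; split => //=; rewrite ex succ_G; apply: G_eqmod.
have := NN_pos m.+1; case: (NN m.+1) => [|N] // _.
by rewrite /= -addnS modnDr.
Qed.

Lemma gv_neq m c s : gv m c s != gv m c s.+1.
Proof.
apply/eqP => /toV_inj e; have := e (size_G _ _ _) (size_G _ _ _).
exact: G_nadj.
Qed.

Lemma edge_sameedge m c s c' s' :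
  edge_of (gv m c s) (gv m c s.+1) = edge_of (gv m c' s') (gv m c' s'.+1) ->
  sameedge (G m.+1 c s) (G m.+1 c s.+1) (G m.+1 c' s') (G m.+1 c' s'.+1).
Proof.
move=> /edge_eq /(_ (gv_neq m c s)).
have I a b := @toV_inj (2 ^ m.+2) _ _ (size_G m.+1 a b).
by case=> [[/I h1 /I h2]|[/I h1 /I h2]]; [left|right]; split;
  [apply: h1 | apply: h2 | apply: h1 | apply: h2]; apply: size_G.
Qed.

Lemma edge_cyc m c s c' s' : c < 2 ^ m.+1 -> c' < 2 ^ m.+1 ->
  edge_of (gv m c s) (gv m c s.+1) = edge_of (gv m c' s') (gv m c' s'.+1) -> c = c'.
Proof. by move=> hc hc' /edge_sameedge; apply: G_disj. Qed.

Lemma edge_pos m c s s' :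
  edge_of (gv m c s) (gv m c s.+1) = edge_of (gv m c s') (gv m c s'.+1) ->
  G m.+1 c s = G m.+1 c s'.
Proof.
by move=> /edge_sameedge [[h _]|[h1 h2]] //; case: (G_noflip h1 h2).
Qed.

Lemma se_edge q x y a b : sameedge x y a b ->
  edge_of (toV q x) (toV q y) = edge_of (toV q a) (toV q b).
Proof. by case=> [[-> ->]|[-> ->]] //; rewrite /edge_of setUC. Qed.

Definition pp m (v : hvert (2 ^ m.+2)) j : hvert (2 ^ m.+2) :=
  toV (2 ^ m.+2) (walk m (fromV v) j).
Arguments pp : clear implicits.

Lemma pedge_pp m (v : hvert (2 ^ m.+2)) l :
  let c := nth 0 (cl m) l in let s := pos m c (walk m (fromV v) l) in
  pedge (pp m v) l.+1 = edge_of (gv m c s) (gv m c s.+1).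
Proof.
move=> c s; have [e1 e2] := walk_S l (size_fromV v).
by rewrite /pedge /pp /gv /c /s; congr edge_of; congr toV.
Qed.

Definition ch m k := take k (cl m).
Definition rest m k := [seq c <- iota 0 (2 ^ m.+1) | c \notin ch m k].

Lemma cl_mem_lt m c : 2 <= m -> c \in cl m -> c < 2 ^ m.+1.
Proof. by move=> hm /(nthP 0) [l hl <-]; apply: cl_lt. Qed.

Lemma size_rest m k : 2 <= m -> k <= 7 -> size (rest m k) = 2 ^ m.+1 - k.
Proof.
move=> hm hk.
have hch : size (ch m k) = k by rewrite size_takel.
have hp : perm_eq [seq c <- iota 0 (2 ^ m.+1) | c \in ch m k] (ch m k).
  apply: uniq_perm; first exact: filter_uniq (iota_uniq _ _).
    by apply: take_uniq; apply: cl_uniq.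
  move=> c; rewrite mem_filter mem_iota add0n.
  case h: (c \in ch m k) => //=.
  by rewrite (cl_mem_lt hm (mem_take h)).
have h1 : count (mem (ch m k)) (iota 0 (2 ^ m.+1)) = k.
  by rewrite -size_filter (perm_size hp) hch.
have h2 := count_predC (mem (ch m k)) (iota 0 (2 ^ m.+1)).
rewrite size_iota in h2.
rewrite /rest size_filter.
have -> : count (fun c => c \notin ch m k) (iota 0 (2 ^ m.+1)) =
          count (predC (mem (ch m k))) (iota 0 (2 ^ m.+1)) by [].
lia.
Qed.

Lemma rest_uniq m k : uniq (rest m k).
Proof. exact: filter_uniq (iota_uniq _ _). Qed.

Lemma mem_rest m k c : (c \in rest m k) = (c < 2 ^ m.+1) && (c \notin ch m k).
Proof. by rewrite mem_filter mem_iota add0n andbC. Qed.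

Lemma ch_nth m k l : k <= 7 -> l < k -> nth 0 (cl m) l \in ch m k.
Proof.
move=> hk hl; rewrite /ch -(nth_take 0 hl); apply: mem_nth.
by rewrite size_takel.
Qed.

Theorem proposition8 (r k : nat) :
  4 <= r -> k <= 7 ->
  exists (H : 'I_(2 ^ r.-1 - k) -> seq (hvert (2 ^ r)))
         (p : hvert (2 ^ r) -> nat -> hvert (2 ^ r)),
    [/\ (forall i, ham_cycle (H i)),
        DVOP k p,
        (forall i j, i != j -> [disjoint cycle_edges (H i) & cycle_edges (H j)]),
        (forall i, [disjoint cycle_edges (H i) & dvop_edges k p])
      & (\bigcup_i cycle_edges (H i)) :|: dvop_edges k p = hedges (2 ^ r)].
Proof.
case: r => [|[|m]] // hr hk.
have hm : 2 <= m by lia.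
have hsz := size_rest hm hk.
have restP (i : 'I_(2 ^ m.+1 - k)) : nth 0 (rest m k) i \in rest m k.
  by apply: mem_nth; rewrite hsz.
exists (fun i => cyc m (nth 0 (rest m k) i)), (pp m).
split.
- by move=> i; apply: cyc_ham.
- split.
  + move=> v; split.
      move=> i j hi hj /toV_inj e.
      have := e (size_walk _ (size_fromV v)) (size_walk _ (size_fromV v)).
      apply: walk_inj_j => //; [exact: size_fromV | lia | lia].
    move=> j /andP [hj1 hjk]; case: j hj1 hjk => [|l] // _ hl.
    have [e1 e2] := walk_S l (size_fromV v).
    rewrite /pp /= {1}e1 hadj_toV ?size_G //; exact: G_adj.
  + move=> v v' j j' /andP [hj1 hjk] /andP [hj1' hjk'] E.
    case: j hj1 hjk E => [|l] // _ hl; case: j' hj1' hjk' => [|l'] // _ hl' E.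
    rewrite !pedge_pp in E.
    have hc := edge_cyc (cl_lt hm (_ : l < 7)) (cl_lt hm (_ : l' < 7)) E.
    have ll : l = l' by apply: (cl_inj hm _ _ (hc _ _)); lia.
    subst l'; split => //.
    have := edge_pos E.
    have [e1 _] := walk_S l (size_fromV v); have [e1' _] := walk_S l (size_fromV v').
    rewrite -e1 -e1' => /walk_inj_x e.
    have := e (size_fromV v) (size_fromV v').
    by move=> e'; rewrite -(toV_fromV v) -(toV_fromV v') e'.
  + by move=> v; rewrite /pp /= toV_fromV.
- move=> i j hij; rewrite -setI_eq0; apply/eqP/setP => E; rewrite !inE.
  apply/negP => /andP [/mem_cyc_edges [s hs] /mem_cyc_edges [s' hs']].
  have := restP i; have := restP j; rewrite !mem_rest => /andP [hcj _] /andP [hci _].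
  rewrite hs in hs'; have := edge_cyc hci hcj hs'.
  move/eqP; rewrite nth_uniq ?rest_uniq ?hsz //.
  by move=> e; move: hij; rewrite -(inj_eq val_inj) e.
- move=> i; rewrite -setI_eq0; apply/eqP/setP => E; rewrite !inE.
  apply/negP => /andP [/mem_cyc_edges [s hs] /imsetP [[v l'] hl hE]].
  rewrite hE in hs; clear hE; move: hl hs; rewrite inE /=; case: l' => [[|l] hl] //= _ hs.
  rewrite pedge_pp in hs.
  have := restP i; rewrite mem_rest => /andP [hci hnot].
  have hl7 : l < 7 by lia.
  have := edge_cyc (cl_lt hm hl7) hci hs => e.
  by move: hnot; rewrite -e ch_nth.
apply/setP => E; apply/idP/idP.
  case/setUP.
    case/bigcupP => i _ /mem_cyc_edges [s ->].
    by apply/imsetP; exists (gv m (nth 0 (rest m k) i) s, gv m (nth 0 (rest m k) i) s.+1);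
      rewrite // inE /= gv_adj.
  case/imsetP => [[v [l hl]]]; rewrite inE /= => hl0 ->.
  case: l hl hl0 => [|l] // hl _.
  rewrite /= pedge_pp; apply/imsetP.
  set c0 := nth 0 (cl m) l; set s0 := pos m c0 _.
  by exists (gv m c0 s0, gv m c0 s0.+1); rewrite // inE /= gv_adj.
case/imsetP => [[u w]]; rewrite inE /= => huw ->.
rewrite adjs_toV in huw.
have [c [s [hc hse]]] := G_cover (size_fromV u) (size_fromV w) huw.
have eE : edge_of u w = edge_of (gv m c s) (gv m c s.+1).
  by rewrite -(toV_fromV u) -(toV_fromV w) (se_edge _ hse).
rewrite eE; apply/setUP.
case hch: (c \in ch m k).
  right; move: hch => /(nthP 0) [l hl].
  rewrite /ch size_takel in hl; last exact: hk.
  rewrite /ch nth_take // => ec.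
  have [x [hx ex]] := walk_surj l (size_G m.+1 c s).
  apply/imsetP; exists (toV (2 ^ m.+2) x, Ordinal (hl : l.+1 < k.+1)); first by rewrite inE.
  rewrite pedge_pp fromV_toV // ex ec pos_G.
  congr edge_of; apply: gv_eqmod; rewrite ?modn_mod // -succ_mod //.
left; apply/bigcupP.
have hcr : c \in rest m k by rewrite mem_rest hc hch.
have hi : index c (rest m k) < 2 ^ m.+1 - k by rewrite -hsz index_mem.
exists (Ordinal hi) => //; apply/mem_cyc_edges; exists s.
by rewrite /= nth_index.
Qed.
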